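(* Let $r \in C$. For any generator $v(x\,;\,c) \in V$ (with $x\in\overline{\mathbb D_1}$, $c\in\mathbb C$), \[ T_r v(x\,;\,c) \;=\; v\big( f_r(x)\,;\,\ell_r(x) \big) \,-\, v\big( f_r(0)\,;\,\ell_r(0) \big), \] where each coordinate of the left-hand side is given by an absolutely convergent series. Therefore, we can define the linear operator $T_r: V \to V$ via coordinatewise matrix–vector multiplication.
   Context: $C$ is a finite index set. For each $r\in C$, $B_r=\begin{pmatrix} a_r & b_r\\ c_r& d_r\end{pmatrix}$ is an invertible $2\times 2$ real matrix with all entries strictly positive. Set \[ \begin{pmatrix} \alpha_r & \beta_r \\ \gamma_r & \delta_r \end{pmatrix}=\frac12\begin{pmatrix} a_r-b_r-c_r+d_r & a_r+b_r-c_r-d_r\\ a_r-b_r+c_r-d_r & a_r+b_r+c_r+d_r\end{pmatrix}, \qquad f_r(x)=\frac{\alpha_r x+\beta_r}{\gamma_r x+\delta_r}, \] so $f_r$ is a real Möbius transformation and there is $0<\rho<1$ with $f_r([-1,1])\subset[-\rho,\rho]$ for all $r\in C$; $f_r'$ is its usual derivative. For a Möbius map $g(x)=\frac{ax+b}{cx+d}$ its ''transpose'' is $g^\top(x)=\frac{ax+c}{bx+d}$; here $f_r^\top([-1,1])\subset(-1,1)$, $\delta_r>0$ and $|f_r^\top(0)|=|\gamma_r/\delta_r|<1$. Define $\ell_r(x)=\mathrm{Log}(\gamma_r x+\delta_r)$ (principal branch, $\mathrm{Log}(1)=0$), holomorphic on a neighborhood of $\overline{\mathbb D_1}$, where $\mathbb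 D_t=\{z\in\mathbb C:|z|<t\}$. For $x\in\overline{\mathbb D_1}$ and $c\in\mathbb C$, $v(x\,;\,c)\in\ell^\infty(\mathbb N_0)$ is the sequence with $(v(x;c))_0=c$ and $(v(x;c))_n=-\frac{(-x)^n}{n}$ for $n\ge1$; $V$ is the complex linear span of all such $v(x\,;\,c)$. $T_r=(b^{(r)}_{k,n})_{k,n\in\mathbb N_0}$ is the infinite matrix with $b^{(r)}_{k,0}=0$ for $k\ge0$, $b^{(r)}_{0,n}=(f_r^\top(0))^n$ for $n\ge1$, and for $k,n\ge1$, \[ b^{(r)}_{k,n}=\sum_{\ell=1}^{\min\{k,n\}}\binom{n}{\ell}\binom{k-1}{\ell-1}(f_r^\top(0))^{n-\ell}(-f_r(0))^{k-\ell}(f_r'(0))^{\ell}, \] acting on sequences by coordinatewise matrix–vector multiplication. *)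

(* Defs.v *)
From Stdlib Require Export Reals.
From Coquelicot Require Export Coquelicot.
Open Scope R_scope.

(* Entries of the matrix (alpha beta; gamma delta) built from B = (a b; c d). *)
Definition alph (a b c d : R) : R := (a - b - c + d) / 2.
Definition bet  (a b c d : R) : R := (a + b - c - d) / 2.
Definition gam  (a b c d : R) : R := (a - b + c - d) / 2.
Definition delt (a b c d : R) : R := (a + b + c + d) / 2.

Definition fR (a b c d : R) (x : R) : R :=
  (alph a b c d * x + bet a b c d) / (gam a b c d * x + delt a b c d).
Definition fC (a b c d : R) (z : C) : C :=
  ((RtoC (alph a b c d) * z + RtoC (bet a b c d)) /
   (RtoC (gam a b c d) * z + RtoC (delt a b c d)))%C.

Definition fT (a b c d : R) (x : R) : R :=
  (alph a b c d * x + gam a b c d) / (bet a b c d * x + delt a b c d).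

(* Principal argument in (-pi, pi] and principal logarithm Log z = ln|z| + i Arg z. *)
Definition Carg (z : C) : R :=
  if Req_EM_T (Im z) 0 then
    (if Rlt_dec (Re z) 0 then PI else 0)
  else 2 * atan (Im z / (Cmod z + Re z)).
Definition CLog (z : C) : C := (RtoC (ln (Cmod z)) + Ci * RtoC (Carg z))%C.

Definition ell (a b c d : R) (z : C) : C :=
  CLog (RtoC (gam a b c d) * z + RtoC (delt a b c d))%C.

Definition vseq (x c0 : C) (n : nat) : C :=
  match n with
  | O => c0
  | S _ => (- (Cpow (- x) n) / RtoC (INR n))%C
  end.

Definition Tentry (a b c d : R) (k n : nat) : R :=
  match k, n with
  | _, O => 0
  | O, S _ => pow (fT a b c d 0) n
  | S _, S _ =>
      sum_n_m (fun l : nat =>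
        Binomial.C n l * Binomial.C (k - 1) (l - 1)
        * pow (fT a b c d 0) (n - l) * pow (- fR a b c d 0) (k - l)
        * pow (Derive (fR a b c d) 0) l) 1 (Nat.min k n)
  end.

(* Main.v *)
Require Import Defs.
From Stdlib Require Import Lra Lia.

Lemma sum_n_Re (a : nat -> C) n : Re (sum_n a n) = sum_n (fun k => Re (a k)) n.
Proof.
  induction n.
  - rewrite !sum_O; reflexivity.
  - rewrite !sum_Sn. rewrite <- IHn. reflexivity.
Qed.

Lemma sum_n_Im (a : nat -> C) n : Im (sum_n a n) = sum_n (fun k => Im (a k)) n.
Proof.
  induction n.
  - rewrite !sum_O; reflexivity.
  - rewrite !sum_Sn. rewrite <- IHn. reflexivity.
Qed.

Lemma is_series_Re (a : nat -> C) (l : C) :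
  is_series a l -> is_series (fun n => Re (a n)) (Re l).
Proof.
  unfold is_series. intros H.
  apply (filterlim_locally_ball_norm (K:=R_AbsRing)). intros eps.
  generalize (proj1 (filterlim_locally_ball_norm (K:=C_AbsRing) _ _) H eps).
  apply filter_imp. intros n Hn. unfold ball_norm in *. rewrite <- sum_n_Re.
  eapply Rle_lt_trans; [|exact Hn].
  change (Rabs (Re (sum_n a n) - Re l) <= Cmod (minus (sum_n a n) l)).
  pose proof (re_le_Cmod (minus (sum_n a n) l)). exact H0.
Qed.

Lemma is_series_Im (a : nat -> C) (l : C) :
  is_series a l -> is_series (fun n => Im (a n)) (Im l).
Proof.
  unfold is_series. intros H.
  apply (filterlim_locally_ball_norm (K:=R_AbsRing)). intros eps.
  generalize (proj1 (filterlim_locally_ball_norm (K:=C_AbsRing) _ _) H eps).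
  apply filter_imp. intros n Hn. unfold ball_norm in *. rewrite <- sum_n_Im.
  eapply Rle_lt_trans; [|exact Hn].
  change (Rabs (Im (sum_n a n) - Im l) <= Cmod (minus (sum_n a n) l)).
  pose proof (Rmax_Cmod (minus (sum_n a n) l)).
  pose proof (Rmax_r (Rabs (fst (minus (sum_n a n) l))) (Rabs (snd (minus (sum_n a n) l)))).
  change (snd (minus (sum_n a n) l)) with (Im (sum_n a n) - Im l) in H1. eapply Rle_trans; [|exact H0]. exact H1.
Qed.

Lemma is_series_C_comp (a : nat -> C) (lr li : R) :
  is_series (fun n => Re (a n)) lr -> is_series (fun n => Im (a n)) li ->
  is_series a (lr, li).
Proof.
  unfold is_series. intros H1 H2.
  apply (filterlim_locally_ball_norm (K:=C_AbsRing)). intros eps.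
  assert (He : 0 < eps / 2) by (destruct eps; simpl; lra).
  pose proof (proj1 (filterlim_locally_ball_norm (K:=R_AbsRing) _ _) H1 (mkposreal _ He)) as E1.
  pose proof (proj1 (filterlim_locally_ball_norm (K:=R_AbsRing) _ _) H2 (mkposreal _ He)) as E2.
  generalize (filter_and _ _ E1 E2). apply filter_imp.
  intros n [Hn1 Hn2]. unfold ball_norm in *.
  rewrite <- sum_n_Re in Hn1. rewrite <- sum_n_Im in Hn2.
  change (Cmod (minus (sum_n a n) (lr, li)) < eps).
  change (Rabs (Re (sum_n a n) - lr) < eps/2) in Hn1.
  change (Rabs (Im (sum_n a n) - li) < eps/2) in Hn2.
  pose proof (Cmod_2Rmax (minus (sum_n a n) (lr, li))) as H.
  change (fst (minus (sum_n a n) (lr, li))) with (Re (sum_n a n) - lr) in H.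
  change (snd (minus (sum_n a n) (lr, li))) with (Im (sum_n a n) - li) in H.
  assert (Hs : sqrt 2 < 2).
  { rewrite <- (sqrt_square 2) at 2 by lra. apply sqrt_lt_1; lra. }
  assert (0 <= sqrt 2) by apply sqrt_pos.
  assert (Rmax (Rabs (Re (sum_n a n) - lr)) (Rabs (Im (sum_n a n) - li)) < eps/2).
  { apply Rmax_lub_lt; lra. }
  assert (0 <= Rmax (Rabs (Re (sum_n a n) - lr)) (Rabs (Im (sum_n a n) - li))).
  { eapply Rle_trans; [apply Rabs_pos| apply Rmax_l]. }
  nra.
Qed.

Lemma is_series_C_bound (a : nat -> C) (l : C) (e : nat -> R) :
  (forall n, Cmod (minus (sum_n a n) l) <= e n) -> is_lim_seq e 0 -> is_series a l.
Proof.
  intros Hb He. unfold is_series.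
  apply (filterlim_locally_ball_norm (K:=C_AbsRing)). intros eps.
  apply is_lim_seq_spec in He. specialize (He eps).
  revert He. apply filter_imp. intros n Hn.
  unfold ball_norm. change (Cmod (minus (sum_n a n) l) < eps).
  specialize (Hb n). rewrite Rminus_0_r in Hn.
  apply Rabs_lt_between in Hn. lra.
Qed.

Lemma geom_partial (z : C) n : (sum_n (fun k => Cpow z k) n * (1 - z) = 1 - Cpow z (S n))%C.
Proof.
  induction n.
  - rewrite sum_O. simpl. ring.
  - rewrite sum_Sn. change (plus ?x ?y) with (x + y)%C.
    rewrite Cmult_plus_distr_r, IHn. simpl. ring.
Qed.

Lemma is_series_geomC (z : C) : Cmod z < 1 ->
  is_series (fun n => Cpow z n) (/ (1 - z))%C.
Proof.
  intros Hz.
  assert (Hnz : (1 - z)%C <> 0%C).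
  { intros E. assert (z = 1%C) by (apply Ceq_minus in E; auto).
    subst. rewrite Cmod_1 in Hz. lra. }
  assert (Hm : 0 < Cmod (1 - z)) by (apply Cmod_gt_0; auto).
  apply is_series_C_bound with (e := fun n => Cmod z ^ S n / Cmod (1 - z)).
  - intros n. right.
    assert (E : minus (sum_n (fun k => Cpow z k) n) (/ (1 - z))%C = (- Cpow z (S n) / (1 - z))%C).
    { change (minus ?x ?y) with (x - y)%C.
      assert (E2 : sum_n (fun k => Cpow z k) n = ((1 - Cpow z (S n)) / (1 - z))%C).
      { rewrite <- geom_partial. generalize (sum_n (fun k => Cpow z k) n). intros S.
        change C in S. change (S = (S * (1 - z)) / (1 - z))%C. field. auto. }
      rewrite E2. change (((1 - Cpow z (S n)) / (1 - z)) - / (1 - z) = - Cpow z (S n) / (1 - z))%C.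
      field. auto. }
    rewrite E, Cmod_div by auto. rewrite Cmod_opp, Cmod_pow. reflexivity.
  - replace (Finite 0) with (Rbar_mult (Finite 0) (Finite (/ Cmod (1 - z)))).
    2: simpl; f_equal; ring.
    apply (is_lim_seq_scal_r (fun n => Cmod z ^ S n) (/ Cmod (1 - z)) 0).
    apply (is_lim_seq_incr_1 (fun n => Cmod z ^ n)).
    apply is_lim_seq_geom. rewrite Rabs_pos_eq by apply Cmod_ge_0. auto.
Qed.

Lemma sum_n_shift {G : AbelianMonoid} (a : nat -> G) N :
  sum_n a (S N) = plus (a 0%nat) (sum_n (fun m => a (S m)) N).
Proof.
  unfold sum_n. rewrite sum_Sn_m by lia. rewrite sum_n_m_S. reflexivity.
Qed.

Definition bc (L m : nat) : R := Binomial.C (L + m) m.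

Lemma bc_pos L m : 0 <= bc L m.
Proof.
  unfold bc, Binomial.C. apply Rmult_le_pos.
  - apply pos_INR.
  - apply Rlt_le, Rinv_0_lt_compat, Rmult_lt_0_compat; apply INR_fact_lt_0.
Qed.

Lemma bc_L0 L : bc L 0 = 1.
Proof. unfold bc. rewrite Nat.add_0_r. apply C_n_0. Qed.

Lemma bc_0m m : bc 0 m = 1.
Proof. unfold bc. apply C_n_n. Qed.

Lemma bc_pascal L m : bc (S L) (S m) = bc L (S m) + bc (S L) m.
Proof.
  unfold bc. replace (S L + S m)%nat with (S (S L + m)) by lia.
  rewrite <- pascal by lia. replace (S L + m)%nat with (L + S m)%nat by lia.
  ring.
Qed.

Lemma sum_n_R_ext (a b : nat -> R) N : (forall n, a n = b n) -> sum_n a N = sum_n b N.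
Proof. intros H. unfold sum_n. apply sum_n_m_ext. auto. Qed.

Lemma sum_n_Rplus (a b : nat -> R) N : sum_n (fun n => a n + b n) N = sum_n a N + sum_n b N.
Proof. unfold sum_n. apply (sum_n_m_plus (G:=R_AbelianMonoid)). Qed.

Lemma sum_n_Rmult_l (c : R) (a : nat -> R) N : sum_n (fun n => c * a n) N = c * sum_n a N.
Proof. unfold sum_n. apply (sum_n_m_mult_l (K:=R_Ring)). Qed.

Lemma bc_partial_bound (r : R) : 0 <= r < 1 ->
  forall L N, sum_n (fun m => bc L m * r ^ m) N <= (/ (1 - r)) ^ (S L).
Proof.
  intros Hr.
  set (q := / (1 - r)).
  assert (Hq1 : 1 <= q). { unfold q. rewrite <- Rinv_1. apply Rinv_le_contravar; lra. }
  assert (Hqr : (1 - r) * q = 1). { unfold q. field. lra. }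
  assert (Hqk : forall k, 1 <= q ^ k) by (intros; apply pow_R1_Rle; lra).
  induction L.
  - induction N.
    + rewrite sum_O. rewrite bc_0m. simpl. lra.
    + rewrite sum_n_shift.
      rewrite (sum_n_R_ext _ (fun m => r * (bc 0 m * r ^ m))).
      2:{ intros n. rewrite !bc_0m. simpl. ring. }
      change (plus ?x ?y) with (x + y).
      rewrite sum_n_Rmult_l. rewrite bc_0m. simpl pow in *. rewrite Rmult_1_r in *.
      assert (r * sum_n (fun m : nat => bc 0 m * r ^ m) N <= r * q).
      { apply Rmult_le_compat_l; lra. }
      nra.
  - induction N.
    + rewrite sum_O. rewrite bc_L0. rewrite pow_O, Rmult_1_r.
      apply Hqk.
    + rewrite sum_n_shift.
      rewrite (sum_n_R_ext _ (fun m => bc L (S m) * r ^ (S m) + r * (bc (S L) m * r ^ m))).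
      2:{ intros n. rewrite bc_pascal. simpl. ring. }
      change (plus ?x ?y) with (x + y).
      rewrite sum_n_Rplus, sum_n_Rmult_l.
      specialize (IHL (S N)). rewrite sum_n_shift in IHL. change (plus ?x ?y) with (x + y) in IHL.
      rewrite bc_L0 in *.
      assert (r * sum_n (fun m : nat => bc (S L) m * r ^ m) N <= r * q ^ S (S L)).
      { apply Rmult_le_compat_l; lra. }
      replace (q ^ S (S L)) with (q ^ S L + r * q ^ S (S L)).
      2:{ simpl. replace (q * (q * q ^ L)) with (q * q * q ^ L) by ring.
          transitivity (q * q ^ L * ((1 - r) * q) + r * (q * q * q ^ L)). rewrite Hqr. ring. ring. }
      lra.
Qed.

Lemma ex_series_bc (r : R) L : 0 <= r < 1 -> ex_series (fun m => bc L m * r ^ m).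
Proof.
  intros Hr.
  destruct (ex_finite_lim_seq_incr (sum_n (fun m => bc L m * r ^ m)) ((/ (1 - r)) ^ (S L))) as [l Hl].
  - intros n. rewrite sum_Sn. change (plus ?x ?y) with (x + y).
    assert (0 <= bc L (S n) * r ^ S n).
    { apply Rmult_le_pos. apply bc_pos. apply pow_le; lra. }
    lra.
  - intros n. apply bc_partial_bound; auto.
  - exists l. exact Hl.
Qed.

Ltac Ceq := match goal with |- ?a = ?b => change (@eq C a b) end.

Lemma Cmod_bc_term L (y : C) m : Cmod (RtoC (bc L m) * Cpow y m)%C = bc L m * Cmod y ^ m.
Proof. rewrite Cmod_mult, Cmod_R, Cmod_pow, Rabs_pos_eq by apply bc_pos. reflexivity. Qed.

Lemma is_series_unique_C (a : nat -> C) l1 l2 : is_series a l1 -> is_series a l2 -> l1 = l2.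
Proof. intros H1 H2. exact (filterlim_locally_unique (K:=C_AbsRing) _ _ _ H1 H2). Qed.

Lemma ex_series_C_abs (a : nat -> C) : ex_series (fun n => Cmod (a n)) -> ex_series a.
Proof.
  intros H. apply (ex_series_le (K:=C_AbsRing) (V:=C_CompleteNormedModule) a (fun n => Cmod (a n))).
  intros n. apply Rle_refl. exact H.
Qed.

Lemma gen_series L (y : C) : Cmod y < 1 ->
  ex_series (fun m => Cmod (RtoC (bc L m) * Cpow y m)%C) /\
  is_series (fun m => RtoC (bc L m) * Cpow y m)%C (/ Cpow (1 - y) (S L))%C.
Proof.
  intros Hy.
  assert (Hnz : (1 - y)%C <> 0%C).
  { intros E. assert (y = 1%C) by (apply Ceq_minus in E; auto).
    subst. rewrite Cmod_1 in Hy. lra. }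
  assert (Hex : forall L, ex_series (fun m => Cmod (RtoC (bc L m) * Cpow y m)%C)).
  { intros L'. apply (ex_series_ext (fun m => bc L' m * Cmod y ^ m)).
    intros; rewrite Cmod_bc_term; auto.
    apply ex_series_bc. split. apply Cmod_ge_0. auto. }
  split. apply Hex.
  induction L.
  - apply (is_series_ext (fun m => Cpow y m)).
    intros n. Ceq. rewrite bc_0m. ring.
    replace (/ Cpow (1 - y) 1)%C with (/ (1 - y))%C by (simpl; f_equal; ring).
    apply is_series_geomC; auto.
  - destruct (ex_series_C_abs _ (Hex (S L))) as [Sb HSb]. change C in Sb.
    set (b := fun m => (RtoC (bc (S L) m) * Cpow y m)%C) in *.
    set (b' := fun n : nat => (match n with O => RtoC 0 | S m => b m end : C)).
    assert (Hb' : is_series b' Sb).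
    { apply is_series_decr_1.
      match goal with |- is_series _ ?l => replace l with Sb end. exact HSb.
      change (@eq C Sb (Sb + - RtoC 0)%C). ring. }
    assert (H2 : is_series b (/ Cpow (1 - y) (S L) + y * Sb)%C).
    { pose proof (is_series_plus _ _ _ _ IHL (is_series_scal y _ _ Hb')) as H3.
      eapply is_series_ext; [|exact H3].
      intros [|m]; change (plus ?x ?y) with (x + y)%C; change (scal ?x ?y) with (x * y)%C;
        unfold b', b; Ceq.
        + rewrite !bc_L0. simpl. ring.
        + rewrite bc_pascal. rewrite RtoC_plus. simpl. ring. }
    pose proof (is_series_unique_C _ _ _ HSb H2) as E.
    replace (/ Cpow (1 - y) (S (S L)))%C with Sb. exact HSb.
    assert (Hp : Cpow (1 - y) (S L) <> 0%C) by (apply Cpow_nz; auto).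
    assert (E2 : (Sb * (1 - y) = / Cpow (1 - y) (S L))%C).
    { replace (Sb * (1 - y))%C with (Sb - y * Sb)%C by ring. rewrite E at 1. ring. }
    change (Cpow (1 - y) (S (S L))) with ((1 - y) * Cpow (1 - y) (S L))%C.
    assert (E3 : (Sb = (Sb * (1 - y)) / (1 - y))%C) by (field; auto).
    rewrite E3, E2. field. split; auto.
Qed.

Lemma is_series_sum_n_C (h : nat -> nat -> C) (H : nat -> C) N :
  (forall j, (j <= N)%nat -> is_series (h j) (H j)) ->
  is_series (fun n => sum_n (fun j => h j n) N) (sum_n H N).
Proof.
  induction N; intros Hh.
  - rewrite sum_O. eapply is_series_ext; [|apply Hh; lia].
    intros n; rewrite sum_O; reflexivity.
  - rewrite sum_Sn.
    pose proof (is_series_plus _ _ _ _ (IHN (fun j Hj => Hh j (le_S _ _ Hj))) (Hh (S N) (le_n _))) as H3.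
    eapply is_series_ext; [|exact H3].
    intros n. rewrite sum_Sn. reflexivity.
Qed.

Lemma ex_series_sum_n_R (h : nat -> nat -> R) N :
  (forall j, (j <= N)%nat -> ex_series (h j)) ->
  ex_series (fun n => sum_n (fun j => h j n) N).
Proof.
  induction N; intros Hh.
  - eapply ex_series_ext; [|apply (Hh 0%nat); lia].
    intros n; rewrite sum_O; reflexivity.
  - pose proof (ex_series_plus _ _ (IHN (fun j Hj => Hh j (le_S _ _ Hj))) (Hh (S N) (le_n _))) as H3.
    eapply ex_series_ext; [|exact H3].
    intros n. rewrite sum_Sn. reflexivity.
Qed.

Lemma Cmod_sum_n (h : nat -> C) N : Cmod (sum_n h N) <= sum_n (fun j => Cmod (h j)) N.
Proof.
  induction N.
  - rewrite !sum_O. lra.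
  - rewrite !sum_Sn.
    change (Cmod (sum_n h N + h (S N))%C <= sum_n (fun j => Cmod (h j)) N + Cmod (h (S N))).
    eapply Rle_trans. apply Cmod_triangle. lra.
Qed.

Lemma sum_n_RtoC_mult (f : nat -> R) (z : C) N :
  sum_n (fun j => (RtoC (f j) * z)%C) N = (RtoC (sum_n f N) * z)%C.
Proof.
  induction N.
  - rewrite !sum_O. reflexivity.
  - rewrite !sum_Sn. rewrite IHN.
    change ((RtoC (sum_n f N) * z + RtoC (f (S N)) * z)%C = (RtoC (sum_n f N + f (S N)) * z)%C).
    rewrite RtoC_plus. ring.
Qed.

Lemma binomC (u w : C) n :
  Cpow (u + w) n = sum_n (fun i => RtoC (Binomial.C n i) * Cpow u (n - i) * Cpow w i)%C n.
Proof.
  induction n.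
  - rewrite sum_O. simpl. rewrite C_n_0. ring.
  - change (Cpow (u + w) (S n)) with ((u + w) * Cpow (u + w) n)%C. rewrite IHn.
    destruct n as [|n].
    + rewrite sum_O, sum_Sn, sum_O. change (plus ?x ?y) with (x + y)%C.
      simpl. rewrite !C_n_0, C_n_n. unfold Binomial.C. simpl. Ceq. field.
    + set (T := fun i => (RtoC (Binomial.C (S n) i) * Cpow u (S n - i) * Cpow w i)%C).
      set (U := fun i => (RtoC (Binomial.C (S (S n)) i) * Cpow u (S (S n) - i) * Cpow w i)%C).
      change (sum_n (fun i => (RtoC (Binomial.C (S n) i) * Cpow u (S n - i) * Cpow w i)%C) (S n)) with (sum_n T (S n)).
      change (sum_n (fun i => (RtoC (Binomial.C (S (S n)) i) * Cpow u (S (S n) - i) * Cpow w i)%C) (S (S n))) with (sum_n U (S (S n))).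
      assert (EL : ((u + w) * sum_n T (S n))%C =
         (u * T 0%nat + sum_n (fun m => u * T (S m)) n + sum_n (fun m => w * T m) n + w * T (S n))%C).
      { rewrite Cmult_plus_distr_r.
        assert (E1 : (u * sum_n T (S n))%C = (u * T 0%nat + sum_n (fun m => u * T (S m)) n)%C).
        { rewrite sum_n_shift. change (plus ?x ?y) with (x + y)%C. rewrite Cmult_plus_distr_l. f_equal.
          unfold sum_n. rewrite (sum_n_m_mult_l (K:=C_Ring)). reflexivity. }
        assert (E2 : (w * sum_n T (S n))%C = (sum_n (fun m => w * T m) n + w * T (S n))%C).
        { rewrite sum_Sn. change (plus ?x ?y) with (x + y)%C. rewrite Cmult_plus_distr_l. f_equal.
          unfold sum_n. rewrite (sum_n_m_mult_l (K:=C_Ring)). reflexivity. }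
        rewrite E1, E2. ring. }
      assert (ER : sum_n U (S (S n)) =
         (u * T 0%nat + sum_n (fun m => u * T (S m) + w * T m) n + w * T (S n))%C).
      { rewrite sum_n_shift. change (plus ?x ?y) with (x + y)%C.
        rewrite sum_Sn. change (plus ?x ?y) with (x + y)%C.
        rewrite (sum_n_ext_loc (fun m => U (S m)) (fun m => (u * T (S m) + w * T m)%C)).
        2:{ intros m Hm. unfold U, T. rewrite <- pascal by lia. rewrite RtoC_plus.
            replace (S (S n) - S m)%nat with (S (S n - S m)) by lia.
            replace (S n - m)%nat with (S (S n - S m)) by lia. simpl. ring. }
        unfold U, T. rewrite !C_n_0, !C_n_n.
        replace (S (S n) - S (S n))%nat with 0%nat by lia.
        replace (S n - S n)%nat with 0%nat by lia. simpl. ring. }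
      rewrite EL, ER. rewrite (sum_n_plus (G:=C_AbelianMonoid)). change (plus ?x ?y) with (x + y)%C.
      ring.
Qed.

Lemma RtoC_nz (r : R) : r <> 0 -> RtoC r <> 0%C.
Proof. intros H E. apply H. injection E. auto. Qed.

Lemma one_plus_nz (z : C) : Cmod z < 1 -> (1 + z)%C <> 0%C.
Proof.
  intros H E. assert (z = (- (1))%C).
  { apply (f_equal (fun w => w - 1)%C) in E. ring_simplify in E. rewrite <- E. ring. }
  subst. rewrite Cmod_m1 in H. lra.
Qed.

Lemma binom_bc j m : Binomial.C (S j + m) (S j) * INR (S j) = bc j m * INR (S j + m).
Proof.
  unfold bc, Binomial.C.
  replace (S j + m - S j)%nat with m by lia. replace (j + m - m)%nat with j by lia.
  replace (S j + m)%nat with (S (j + m)) by lia.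
  rewrite !fact_simpl, !mult_INR.
  field. repeat split; try apply INR_fact_neq_0; apply not_0_INR; lia.
Qed.

Definition coef (t s D : R) (k' j n : nat) : R :=
  if (S j <=? n)%nat then Binomial.C n (S j) * Binomial.C k' j * t ^ (n - S j) * s ^ (k' - j) * D ^ (S j) else 0.

Definition Hj (t s D : R) (x : C) (k' j : nat) : C :=
  (- (RtoC (Binomial.C k' j * s ^ (k' - j) * D ^ (S j)) * Cpow (- x) (S j) / RtoC (INR (S j)))
    / Cpow (1 + RtoC t * x) (S j))%C.

Lemma per_j (t s D : R) (x c0 : C) k' j : Rabs t < 1 -> Cmod x <= 1 ->
  ex_series (fun n => Cmod (RtoC (coef t s D k' j n) * vseq x c0 n)%C) /\
  is_series (fun n => RtoC (coef t s D k' j n) * vseq x c0 n)%C (Hj t s D x k' j).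
Proof.
  intros Ht Hx.
  set (y := (- (RtoC t * x))%C).
  assert (Hy : Cmod y < 1).
  { unfold y. rewrite Cmod_opp, Cmod_mult, Cmod_R.
    assert (0 <= Cmod x) by apply Cmod_ge_0. assert (0 <= Rabs t) by apply Rabs_pos. nra. }
  destruct (gen_series j y Hy) as [Gex Gis].
  set (K := (- (RtoC (Binomial.C k' j * s ^ (k' - j) * D ^ (S j)) * Cpow (- x) (S j) / RtoC (INR (S j))))%C).
  set (term := fun n => (RtoC (coef t s D k' j n) * vseq x c0 n)%C).
  assert (Hsh : forall m, term (S j + m)%nat = (K * (RtoC (bc j m) * Cpow y m))%C).
  { intros m. unfold term, coef, K, y.
    replace (S j <=? S j + m)%nat with true by (symmetry; apply Nat.leb_le; lia).
    replace (S j + m - S j)%nat with m by lia.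
    change (vseq x c0 (S j + m)) with (- Cpow (- x) (S j + m) / RtoC (INR (S j + m)))%C.
    assert (EB : Binomial.C (S j + m) (S j) = bc j m * INR (S j + m) / INR (S j)).
    { rewrite <- binom_bc. field. apply not_0_INR. lia. }
    rewrite EB. rewrite Cpow_add_r.
    replace (- (RtoC t * x))%C with (RtoC t * (- x))%C by ring.
    rewrite Cpow_mult_l. rewrite <- RtoC_pow.
    rewrite !RtoC_mult, RtoC_div by (apply not_0_INR; lia). rewrite !RtoC_mult.
    field. split; apply RtoC_nz; apply not_0_INR; lia. }
  assert (Hz : forall n, (n <= j)%nat -> term n = 0%C).
  { intros n Hn. unfold term, coef. replace (S j <=? n)%nat with false by (symmetry; apply Nat.leb_gt; lia).
    ring. }
  split.
  - apply (ex_series_incr_n _ (S j)).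
    apply (ex_series_ext (fun m => Cmod K * Cmod (RtoC (bc j m) * Cpow y m)%C)).
    + intros m. fold (term (S j + m)%nat). rewrite Hsh. symmetry. apply Cmod_mult.
    + apply (ex_series_scal_l (K:=R_AbsRing) (V:=R_NormedModule)). exact Gex.
  - apply (is_series_decr_n _ (S j)). lia.
    assert (E0 : sum_n term (Init.Nat.pred (S j)) = RtoC 0).
    { simpl Init.Nat.pred. rewrite (sum_n_ext_loc _ (fun _ => zero)). unfold sum_n. rewrite sum_n_m_const_zero. reflexivity.
      intros n Hn. apply Hz. auto. }
    simpl Init.Nat.pred in E0 |- *. fold term.
    eapply is_series_ext. { intros m. symmetry. apply Hsh. }
    match goal with |- is_series _ ?l => replace l with (K * / Cpow (1 - y) (S j))%C end.
    apply (is_series_scal K _ _ Gis).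
    change (@eq C (K * / Cpow (1 - y) (S j))%C (Hj t s D x k' j - sum_n (G:=C_AbelianMonoid) term j)%C).
    rewrite E0. unfold Hj, K, y.
    replace (1 - - (RtoC t * x))%C with (1 + RtoC t * x)%C by ring. field.
    split. apply RtoC_nz, not_0_INR; lia. apply Cpow_nz. apply one_plus_nz.
    rewrite Cmod_mult, Cmod_R.
    assert (0 <= Cmod x) by apply Cmod_ge_0. assert (0 <= Rabs t) by apply Rabs_pos. nra.
Qed.

Lemma main_pos (t s D : R) (x c0 : C) k' : Rabs t < 1 -> Cmod x <= 1 ->
  ex_series (fun n => Cmod (RtoC (sum_n (G:=R_AbelianMonoid) (fun j => coef t s D k' j n) k') * vseq x c0 n)%C) /\
  is_series (fun n => RtoC (sum_n (G:=R_AbelianMonoid) (fun j => coef t s D k' j n) k') * vseq x c0 n)%C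
    (sum_n (Hj t s D x k') k').
Proof.
  intros Ht Hx.
  split.
  - apply (ex_series_le (K:=R_AbsRing) (V:=R_CompleteNormedModule) _
      (fun n => sum_n (fun j => Cmod (RtoC (coef t s D k' j n) * vseq x c0 n)%C) k')).
    + intros n. rewrite <- sum_n_RtoC_mult.
      eapply Rle_trans; [|apply Cmod_sum_n].
      assert (Hn : forall r : R, 0 <= r -> norm r = r).
      { intros r Hr. change (Rabs r = r). apply Rabs_pos_eq. auto. }
      rewrite Hn by apply Cmod_ge_0. apply Rle_refl.
    + apply ex_series_sum_n_R. intros j _. apply (per_j t s D x c0 k' j Ht Hx).
  - apply (is_series_ext (fun n => sum_n (fun j => RtoC (coef t s D k' j n) * vseq x c0 n)%C k')).
    { intros n. apply sum_n_RtoC_mult. }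
    apply is_series_sum_n_C. intros j _. apply (per_j t s D x c0 k' j Ht Hx).
Qed.

Lemma binom_S n j : (j <= n)%nat -> Binomial.C (S n) (S j) * INR (S j) = Binomial.C n j * INR (S n).
Proof.
  intros Hj. unfold Binomial.C. simpl (S n - S j)%nat.
  rewrite !fact_simpl, !mult_INR.
  field. repeat split; try apply INR_fact_neq_0; apply not_0_INR; lia.
Qed.

Lemma rhs_identity (t s D : R) (x z0 z1 c1 c2 : C) k' :
  (1 + RtoC t * x)%C <> 0%C ->
  (- z1)%C = (RtoC s + RtoC D * (- x) / (1 + RtoC t * x))%C ->
  (- z0)%C = RtoC s ->
  (vseq z1 c1 (S k') - vseq z0 c2 (S k'))%C = sum_n (Hj t s D x k') k'.
Proof.
  intros Hnz E1 E0.
  set (w := (RtoC D * (- x) / (1 + RtoC t * x))%C) in *.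
  change (vseq z1 c1 (S k')) with (- Cpow (- z1) (S k') / RtoC (INR (S k')))%C.
  change (vseq z0 c2 (S k')) with (- Cpow (- z0) (S k') / RtoC (INR (S k')))%C.
  rewrite E1, E0. rewrite binomC. rewrite sum_n_shift.
  change (plus ?a ?b) with (a + b)%C.
  rewrite C_n_0. replace (S k' - 0)%nat with (S k') by lia.
  assert (HK : RtoC (INR (S k')) <> 0%C) by (apply RtoC_nz, not_0_INR; lia).
  transitivity (sum_n (fun j => - (RtoC (Binomial.C (S k') (S j)) * Cpow (RtoC s) (S k' - S j) * Cpow w (S j)) / RtoC (INR (S k')))%C k').
  - unfold sum_n. symmetry. rewrite (sum_n_m_ext _ (fun j => mult (RtoC (Binomial.C (S k') (S j)) * Cpow (RtoC s) (S k' - S j) * Cpow w (S j))%C (- / RtoC (INR (S k')))%C)).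
    2:{ intros j. change (mult ?a ?b) with (a * b)%C. Ceq. field. auto. }
    rewrite (sum_n_m_mult_r (K:=C_Ring)). change (mult ?a ?b) with (a * b)%C.
    assert (Eq : forall A B : C, A = B -> (A * - / RtoC (INR (S k')) = - (1 * Cpow (RtoC s) (S k') * Cpow w 0 + B) / RtoC (INR (S k')) - - Cpow (RtoC s) (S k') / RtoC (INR (S k')))%C).
    { intros A B ->. simpl Cpow at 2. field. auto. }
    apply Eq. reflexivity.
  - apply sum_n_ext_loc. intros j Hj'. unfold Hj, w.
    simpl (S k' - S j)%nat.
    assert (EB : Binomial.C (S k') (S j) = Binomial.C k' j * INR (S k') / INR (S j)).
    { rewrite <- binom_S by lia. field. apply not_0_INR. lia. }
    rewrite EB. rewrite !RtoC_mult, RtoC_div by (apply not_0_INR; lia). rewrite !RtoC_mult.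
    rewrite !RtoC_pow.
    assert (HJ : RtoC (INR (S j)) <> 0%C) by (apply RtoC_nz, not_0_INR; lia).
    Ceq. 
    replace (Cpow (RtoC D * - x / (1 + RtoC t * x)) (S j)) with
      (Cpow (RtoC D) (S j) * Cpow (- x) (S j) / Cpow (1 + RtoC t * x) (S j))%C.
    2:{ unfold Cdiv. rewrite !Cpow_mult_l, Cpow_inv by auto. reflexivity. }
    field. repeat split; auto. apply Cpow_nz; auto.
Qed.

Lemma Re_RC (c : R) (z : C) : Re (RtoC c * z)%C = c * Re z.
Proof. destruct z; simpl. ring. Qed.
Lemma Im_RC (c : R) (z : C) : Im (RtoC c * z)%C = c * Im z.
Proof. destruct z; simpl. ring. Qed.

Lemma vseq_bound (y : C) n : Cmod (vseq y (RtoC 0) n) <= Cmod y ^ n.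
Proof.
  destruct n as [|n].
  - simpl. rewrite Cmod_0. lra.
  - change (vseq y 0 (S n)) with (- Cpow (- y) (S n) / RtoC (INR (S n)))%C.
    rewrite Cmod_div by (apply RtoC_nz, not_0_INR; lia).
    rewrite Cmod_opp, Cmod_pow, Cmod_opp, Cmod_R.
    rewrite Rabs_pos_eq by apply pos_INR.
    assert (1 <= INR (S n)) by (apply (le_INR 1); lia).
    assert (0 <= Cmod y ^ S n) by (apply pow_le, Cmod_ge_0).
    apply Rmult_le_reg_r with (INR (S n)). lra.
    unfold Rdiv. rewrite Rmult_assoc, Rinv_l by lra. nra.
Qed.

Lemma radius_gt (a : nat -> R) (y : C) : Cmod y < 1 ->
  (forall n, Rabs (a n) <= Cmod y ^ n) ->
  forall r, Rabs r <= 1 -> Rbar_lt (Rabs r) (CV_radius a).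
Proof.
  intros Hy Ha r Hr.
  set (rho := 2 / (1 + Cmod y)).
  assert (Hy0 : 0 <= Cmod y) by apply Cmod_ge_0.
  assert (Hrho : 1 < rho) by (unfold rho; apply Rmult_lt_reg_r with (1 + Cmod y); [lra|]; field_simplify; lra).
  assert (Hq : Cmod y * rho <= 1).
  { unfold rho. apply Rmult_le_reg_r with (1 + Cmod y). lra. field_simplify; lra. }
  assert (Hle : Rbar_le rho (CV_radius a)).
  { apply (proj1 (CV_radius_bounded a)). exists 1. intros n.
    rewrite Rabs_mult, <- RPow_abs. rewrite (Rabs_pos_eq rho) by lra.
    apply Rle_trans with (Cmod y ^ n * rho ^ n).
    apply Rmult_le_compat_r. apply pow_le; lra. apply Ha.
    rewrite <- Rpow_mult_distr. rewrite <- (pow1 n). apply pow_incr. split; nra. }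
  destruct (CV_radius a) as [R0| |]; simpl in *; lra.
Qed.

Lemma Carg_pos (z : C) : 0 < Re z -> Carg z = atan (Im z / Re z).
Proof.
  intros Hu. unfold Carg.
  destruct (Req_EM_T (Im z) 0) as [E0|E0].
  - destruct (Rlt_dec (Re z) 0). lra. rewrite E0. unfold Rdiv. rewrite Rmult_0_l, atan_0. reflexivity.
  - destruct z as [u v]. simpl in *.
    assert (Hm : Cmod (u, v) = sqrt (u ^ 2 + v ^ 2)) by reflexivity.
    rewrite Hm. set (m := sqrt (u ^ 2 + v ^ 2)).
    assert (Hm2 : m * m = u ^ 2 + v ^ 2) by (apply sqrt_sqrt; nra).
    assert (Hm0 : 0 <= m) by apply sqrt_pos.
    assert (Hav : Rabs v * Rabs v = v * v) by (rewrite <- Rabs_mult; apply Rabs_pos_eq; nra).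
    assert (Hvm : Rabs v <= m).
    { destruct (Rle_lt_dec (Rabs v) m) as [h|h]; auto. pose proof (Rabs_pos v). nra. }
    assert (Hmu : 0 < m + u) by lra.
    set (T := v / (m + u)).
    assert (HT : -1 < T < 1).
    { unfold T. split.
      - apply Rmult_lt_reg_r with (m + u). lra. unfold Rdiv. rewrite Rmult_assoc, Rinv_l by lra.
        pose proof (Rabs_le_between' v). pose proof (Rle_abs (-v)). rewrite Rabs_Ropp in *. lra.
      - apply Rmult_lt_reg_r with (m + u). lra. unfold Rdiv. rewrite Rmult_assoc, Rinv_l by lra.
        pose proof (Rle_abs v). lra. }
    assert (Hth : - (PI / 4) < atan T < PI / 4).
    { rewrite <- atan_1. rewrite <- atan_opp. split; apply atan_increasing; lra. }
    assert (HPI : 0 < PI) by apply PI_RGT_0.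
    assert (E : 1 - T * T = 2 * u / (m + u)).
    { unfold T. field_simplify_eq; [nra|lra]. }
    assert (Etan : tan (2 * atan T) = v / u).
    { rewrite tan_2a. rewrite tan_atan. rewrite E. unfold T. field. lra.
      - apply Rgt_not_eq, cos_gt_0; lra.
      - apply Rgt_not_eq, cos_gt_0; lra.
      - rewrite tan_atan, E. apply Rgt_not_eq. apply Rdiv_lt_0_compat; lra. }
    rewrite <- Etan. rewrite atan_tan. reflexivity. lra.
Qed.

Lemma Cdiv_comp (y : C) (r : R) : (1 + RtoC r * y)%C <> 0%C ->
  Re (y / (1 + RtoC r * y))%C = (Re y * (1 + r * Re y) + Im y * (r * Im y)) / ((1 + r * Re y) ^ 2 + (r * Im y) ^ 2) /\
  Im (y / (1 + RtoC r * y))%C = Im y / ((1 + r * Re y) ^ 2 + (r * Im y) ^ 2).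
Proof.
  intros Hnz. destruct y as [y1 y2]. simpl.
  assert (Hn : (1 + r * y1) ^ 2 + (r * y2) ^ 2 <> 0).
  { intros E. apply Hnz.
    assert (h1 := pow2_ge_0 (1 + r * y1)). assert (h2 := pow2_ge_0 (r * y2)).
    assert (p0 : (1 + r * y1) ^ 2 = 0) by lra. assert (q0 : (r * y2) ^ 2 = 0) by lra.
    assert (p1 : 1 + r * y1 = 0). { destruct (Req_dec (1 + r * y1) 0); auto. exfalso; apply (pow_nonzero _ 2 H p0). }
    assert (q1 : r * y2 = 0). { destruct (Req_dec (r * y2) 0); auto. exfalso; apply (pow_nonzero _ 2 H q0). }
    apply injective_projections; simpl; lra. }
  unfold Cdiv, Cinv, Cmult; simpl. split; field; intros E; apply Hn; nra.
Qed.

Lemma series_of_pseries (a : nat -> R) : Rbar_lt (Rabs 1) (CV_radius a) -> is_series a (PSeries a 1).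
Proof.
  intros H. pose proof (PSeries_correct a 1 (CV_radius_inside a 1 H)) as H2.
  unfold is_pseries in H2. eapply is_series_ext; [|exact H2].
  intros n. change (mult (pow_n (K:=R_Ring) 1 n) (a n) = a n). rewrite pow_n_pow, pow1. change (@eq R (1 * a n) (a n)). ring.
Qed.

Lemma deriv_series (y : C) (r : R) (a : nat -> R) (proj : C -> R) :
  Cmod y < 1 -> Rabs r <= 1 ->
  (forall c z, proj (RtoC c * z)%C = c * proj z) ->
  (forall a0 l, is_series a0 l -> is_series (fun n => proj (a0 n)) (proj l)) ->
  (forall n, a n = proj (vseq y (RtoC 0) n)) ->
  PSeries (PS_derive a) r = proj (y / (1 + RtoC r * y))%C.
Proof.
  intros Hy Hr Hlin Hser Ha.
  assert (Hry : Cmod (- (RtoC r * y))%C < 1).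
  { rewrite Cmod_opp, Cmod_mult, Cmod_R. assert (0 <= Cmod y) by apply Cmod_ge_0.
    assert (0 <= Rabs r) by apply Rabs_pos. nra. }
  pose proof (is_series_scal y _ _ (is_series_geomC _ Hry)) as H1.
  apply Hser in H1.
  unfold PSeries. apply is_series_unique.
  eapply is_series_ext; [|exact H1 ||
     (replace (proj (y / (1 + RtoC r * y))%C) with (proj (scal y (/ (1 - - (RtoC r * y))))%C);
      [exact H1| change (scal ?u ?v) with (u * v)%C; f_equal; Ceq; field; replace (1 - - (RtoC r * y))%C with (1 + RtoC r * y)%C by ring; apply one_plus_nz; rewrite <- Cmod_opp; exact Hry])].
  intros n. unfold PS_derive. rewrite Ha.
  change (vseq y 0 (S n)) with (- Cpow (- y) (S n) / RtoC (INR (S n)))%C.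
  change (scal y (Cpow (- (RtoC r * y)) n)) with (y * Cpow (- (RtoC r * y)) n)%C.
  replace (y * Cpow (- (RtoC r * y)) n)%C with (RtoC (INR (S n) * r ^ n) * (- Cpow (- y) (S n) / RtoC (INR (S n))))%C.
  - rewrite Hlin. match goal with |- ?u = ?v => change (@eq R u v) end. ring.
  - rewrite RtoC_mult, RtoC_pow. replace (- (RtoC r * y))%C with (RtoC r * - y)%C by ring.
    rewrite Cpow_mult_l. change (Cpow (- y) (S n)) with ((- y) * Cpow (- y) n)%C. field. apply RtoC_nz, not_0_INR. lia.
Qed.

Lemma log_series (y : C) : Cmod y < 1 -> is_series (vseq y (RtoC 0)) (CLog (1 + y))%C.
Proof.
  intros Hy.
  set (a := fun n => Re (vseq y (RtoC 0) n)).
  set (b := fun n => Im (vseq y (RtoC 0) n)).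
  set (y1 := Re y). set (y2 := Im y).
  assert (Hy1 : Rabs y1 < 1) by (eapply Rle_lt_trans; [apply re_le_Cmod|exact Hy]).
  assert (Ha : forall n, Rabs (a n) <= Cmod y ^ n).
  { intros n. eapply Rle_trans; [apply re_le_Cmod|apply vseq_bound]. }
  assert (Hb : forall n, Rabs (b n) <= Cmod y ^ n).
  { intros n. eapply Rle_trans; [|apply vseq_bound].
    eapply Rle_trans; [|apply Rmax_Cmod]. apply Rmax_r. }
  assert (Hpos : forall r, 0 <= r <= 1 -> 0 < 1 + r * y1).
  { intros r Hr. assert (-1 < y1 < 1) by (destruct (Rabs_def2 _ _ Hy1); lra).
    destruct (Rle_lt_dec 0 y1). nra.
    assert ((1 - r) * (- y1) >= 0) by nra. nra. }
  assert (Hnz : forall r, 0 <= r <= 1 -> (1 + RtoC r * y)%C <> 0%C).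
  { intros r Hr E. specialize (Hpos r Hr).
    apply (f_equal Re) in E. simpl in E. unfold y1, Re in Hpos. lra. }
  set (N := fun r => (1 + r * y1) ^ 2 + (r * y2) ^ 2).
  assert (HN : forall r, 0 <= r <= 1 -> 0 < N r).
  { intros r Hr. specialize (Hpos r Hr). unfold N. nra. }
  set (P := fun r => ln ((1 + r * y1) ^ 2 + (r * y2) ^ 2) / 2).
  set (Q := fun r => atan (r * y2 / (1 + r * y1))).
  assert (HF : PSeries a 1 = P 1).
  { assert (E := eq_is_derive (fun r => PSeries a r - P r) 0 1).
    simpl in E. rewrite PSeries_0 in E.
    assert (a 0%nat = 0) by (unfold a; simpl; reflexivity).
    assert (P 0 = 0) by (unfold P; rewrite Rmult_0_l, Rplus_0_r, pow1, Rmult_0_l; simpl; rewrite Rmult_0_l, Rplus_0_r, ln_1; field).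
    enough (PSeries a 1 - P 1 = 0) by lra.
    rewrite <- E. lra. 2: lra.
    intros r Hr.
    replace (@zero R_NormedModule) with (minus (PSeries (PS_derive a) r) (PSeries (PS_derive a) r)).
    2:{ exact (minus_eq_zero (G:=R_AbelianGroup) _). }
    apply (is_derive_minus (K:=R_AbsRing) (V:=R_NormedModule)).
    - apply is_derive_PSeries. apply (radius_gt a y Hy Ha). rewrite Rabs_pos_eq; lra.
    - rewrite (deriv_series y r a Re Hy) ; auto.
      + destruct (Cdiv_comp y r (Hnz r Hr)) as [E1 _]. rewrite E1.
        unfold P. specialize (HN r Hr). unfold N in HN. fold y1 y2.
        auto_derive. lra. field. lra.
      + rewrite Rabs_pos_eq; lra.
      + apply Re_RC.
      + apply is_series_Re. }
  assert (HG : PSeries b 1 = Q 1).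
  { assert (E := eq_is_derive (fun r => PSeries b r - Q r) 0 1).
    simpl in E. rewrite PSeries_0 in E.
    assert (b 0%nat = 0) by (unfold b; simpl; reflexivity).
    assert (Q 0 = 0) by (unfold Q; rewrite !Rmult_0_l, Rplus_0_r; unfold Rdiv; rewrite Rmult_0_l; apply atan_0).
    enough (PSeries b 1 - Q 1 = 0) by lra.
    rewrite <- E. lra. 2: lra.
    intros r Hr.
    replace (@zero R_NormedModule) with (minus (PSeries (PS_derive b) r) (PSeries (PS_derive b) r)).
    2:{ exact (minus_eq_zero (G:=R_AbelianGroup) _). }
    apply (is_derive_minus (K:=R_AbsRing) (V:=R_NormedModule)).
    - apply is_derive_PSeries. apply (radius_gt b y Hy Hb). rewrite Rabs_pos_eq; lra.
    - rewrite (deriv_series y r b Im Hy) ; auto.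
      + destruct (Cdiv_comp y r (Hnz r Hr)) as [_ E1]. rewrite E1.
        unfold Q. specialize (HN r Hr). specialize (Hpos r Hr). unfold N in HN. fold y1 y2.
        auto_derive. lra. field. lra.
      + rewrite Rabs_pos_eq; lra.
      + apply Im_RC.
      + apply is_series_Im. }
  assert (H1 : Rbar_lt (Rabs 1) (CV_radius a)) by (apply (radius_gt a y Hy Ha); rewrite Rabs_R1; lra).
  assert (H2 : Rbar_lt (Rabs 1) (CV_radius b)) by (apply (radius_gt b y Hy Hb); rewrite Rabs_R1; lra).
  pose proof (series_of_pseries a H1) as Sa. pose proof (series_of_pseries b H2) as Sb.
  rewrite HF in Sa. rewrite HG in Sb.
  pose proof (is_series_C_comp _ _ _ Sa Sb) as Hc.
  replace (CLog (1 + y)) with (P 1, Q 1). exact Hc.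
  assert (Hp1 := Hpos 1 ltac:(lra)).
  assert (Hre : 0 < Re (1 + y)%C) by (unfold y1, Re in Hp1; simpl; lra).
  unfold CLog. rewrite Carg_pos by exact Hre.
  unfold P, Q. simpl. fold y1 y2.
  assert (HM : ln (Cmod (1 + y)) = ln ((1 + 1 * y1) ^ 2 + (1 * y2) ^ 2) / 2).
  { assert (Hcm : Cmod (1 + y) = sqrt ((1 + y1) ^ 2 + y2 ^ 2)).
    { unfold Cmod. f_equal. simpl. unfold y1, y2, Re, Im. ring. }
    rewrite Hcm. set (M := (1 + y1) ^ 2 + y2 ^ 2).
    replace ((1 + 1 * y1) ^ 2 + (1 * y2) ^ 2) with M by (unfold M; ring).
    assert (HM0 : 0 < M) by (unfold M; nra).
    rewrite <- (sqrt_sqrt M) at 2 by lra. rewrite ln_mult by (apply sqrt_lt_R0; lra). field. }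
  rewrite HM. apply injective_projections; simpl.
  - ring.
  - rewrite !Rmult_1_l. replace (0 + snd y) with y2 by (unfold y2, Im; ring).
    replace (fst y) with y1 by reflexivity. ring.
Qed.

Lemma CLog_scale (d : R) (z : C) : 0 < d -> 0 < Re z -> CLog (RtoC d * z)%C = (RtoC (ln d) + CLog z)%C.
Proof.
  intros Hd Hz.
  assert (Hz0 : 0 < Cmod z).
  { apply Cmod_gt_0. intros E. rewrite E in Hz. simpl in Hz. lra. }
  unfold CLog. rewrite Cmod_mult, Cmod_R, Rabs_pos_eq by lra.
  rewrite ln_mult by lra.
  rewrite !Carg_pos.
  2: exact Hz.
  2: rewrite Re_RC; nra.
  rewrite Re_RC, Im_RC.
  replace (d * Im z / (d * Re z)) with (Im z / Re z) by (field; lra).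
  apply injective_projections; simpl; ring.
Qed.

Lemma CLog_pos (d : R) : 0 < d -> CLog (RtoC d) = RtoC (ln d).
Proof.
  intros Hd. unfold CLog. rewrite Cmod_R, Rabs_pos_eq by lra.
  unfold Carg. simpl.
  destruct (Req_EM_T 0 0) as [_|n]; [|congruence].
  destruct (Rlt_dec d 0). lra.
  apply injective_projections; simpl; ring.
Qed.

Lemma sum_n_trunc (f : nat -> R) M d : (forall j, (M < j <= M + d)%nat -> f j = 0) ->
  sum_n f (M + d) = sum_n f M.
Proof.
  induction d; intros H.
  - rewrite Nat.add_0_r. reflexivity.
  - rewrite Nat.add_succ_r, sum_Sn. rewrite IHd by (intros; apply H; lia).
    rewrite H by lia. apply (plus_zero_r (G:=R_AbelianMonoid)).
Qed.

Theorem lemma3p9 :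
  forall a b c d : R,
    0 < a -> 0 < b -> 0 < c -> 0 < d -> a * d - b * c <> 0 ->
  forall (x c0 : C), Cmod x <= 1 ->
  forall k : nat,
    ex_series (fun n : nat => Cmod (RtoC (Tentry a b c d k n) * vseq x c0 n)%C) /\
    is_series (fun n : nat => (RtoC (Tentry a b c d k n) * vseq x c0 n)%C)
      (vseq (fC a b c d x) (ell a b c d x) k
       - vseq (fC a b c d 0) (ell a b c d 0) k)%C.
Proof.
  intros a b c d Ha Hb Hc Hd Hdet x c0 Hx k.
  set (al := alph a b c d). set (be := bet a b c d). set (ga := gam a b c d). set (de := delt a b c d).
  assert (Hde : 0 < de) by (unfold de, delt; lra).
  assert (Hga : Rabs ga < de) by (unfold ga, de, gam, delt; apply Rabs_def1; lra).
  set (t := fT a b c d 0).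
  assert (Et : t = ga / de) by (unfold t, fT; fold al be ga de; field; lra).
  assert (Ht : Rabs t < 1).
  { rewrite Et. unfold Rdiv. rewrite Rabs_mult, Rabs_inv, (Rabs_pos_eq de) by lra.
    apply Rmult_lt_reg_r with de. lra. rewrite Rmult_assoc, Rinv_l by lra. lra. }
  assert (Htx : Cmod (RtoC t * x)%C < 1).
  { rewrite Cmod_mult, Cmod_R. assert (0 <= Cmod x) by apply Cmod_ge_0.
    assert (0 <= Rabs t) by apply Rabs_pos. nra. }
  assert (Hnz : (1 + RtoC t * x)%C <> 0%C) by (apply one_plus_nz; auto).
  assert (Hre : 0 < Re (1 + RtoC t * x)%C).
  { change (Re (1 + RtoC t * x)%C) with (1 + Re (RtoC t * x)%C).
    pose proof (re_le_Cmod (RtoC t * x)). pose proof (Rabs_maj2 (Re (RtoC t * x)%C)). lra. }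
  destruct k as [|k'].
  -
    assert (Eterm : forall n, (RtoC (Tentry a b c d 0 n) * vseq x c0 n)%C = vseq (RtoC t * x) (RtoC 0) n).
    { intros [|n].
      - simpl. ring.
      - change (Tentry a b c d 0 (S n)) with (t ^ (S n)).
        change (vseq x c0 (S n)) with (- Cpow (- x) (S n) / RtoC (INR (S n)))%C.
        change (vseq (RtoC t * x) (RtoC 0) (S n)) with (- Cpow (- (RtoC t * x)) (S n) / RtoC (INR (S n)))%C.
        rewrite RtoC_pow. replace (- (RtoC t * x))%C with (RtoC t * - x)%C by ring.
        rewrite Cpow_mult_l. field. apply RtoC_nz, not_0_INR. lia. }
    split.
    + apply (ex_series_ext (fun n => Cmod (vseq (RtoC t * x) (RtoC 0) n))).
      { intros n. rewrite Eterm. reflexivity. }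
      apply (ex_series_le (K:=R_AbsRing) (V:=R_CompleteNormedModule) _ (fun n => Cmod (RtoC t * x) ^ n)).
      * intros n. change (norm ?z) with (Rabs z). rewrite Rabs_pos_eq by apply Cmod_ge_0. apply vseq_bound.
      * apply ex_series_geom. rewrite Rabs_pos_eq by apply Cmod_ge_0. auto.
    + eapply is_series_ext. { intros n. symmetry. apply Eterm. }
      replace (vseq (fC a b c d x) (ell a b c d x) 0 - vseq (fC a b c d 0) (ell a b c d 0) 0)%C
        with (CLog (1 + RtoC t * x)). apply log_series; auto.
      simpl vseq. unfold ell. fold ga de.
      replace (RtoC ga * x + RtoC de)%C with (RtoC de * (1 + RtoC t * x))%C.
      2:{ rewrite Et. rewrite RtoC_div by lra. field. apply RtoC_nz. lra. }
      replace (RtoC ga * RtoC 0 + RtoC de)%C with (RtoC de) by ring.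
      rewrite CLog_scale, CLog_pos by lra.
      ring.
  - set (s := - fR a b c d 0). set (D := Derive (fR a b c d) 0).
    assert (Es : s = - (be / de)) by (unfold s, fR; fold al be ga de; field; lra).
    assert (ED : D = (al * de - be * ga) / (de * de)).
    { unfold D. apply is_derive_unique. unfold fR. fold al be ga de.
      auto_derive. lra. field. lra. }
    assert (ET : forall n, Tentry a b c d (S k') n = sum_n (G:=R_AbelianMonoid) (fun j => coef t s D k' j n) k').
    { intros [|n].
      - simpl Tentry. symmetry. unfold sum_n. rewrite (sum_n_m_ext_loc _ (fun _ => zero)).
        rewrite sum_n_m_const_zero. reflexivity. intros j _. reflexivity.
      - change (Tentry a b c d (S k') (S n)) with
          (sum_n_m (fun l : nat =>
            Binomial.C (S n) l * Binomial.C (S k' - 1) (l - 1)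
            * pow t (S n - l) * pow s (S k' - l)
            * pow D l) 1 (Nat.min (S k') (S n))).
        replace (Nat.min (S k') (S n)) with (S (Nat.min k' n)) by reflexivity. rewrite <- sum_n_m_S.
        change (sum_n_m ?f 0 ?m) with (sum_n f m).
        rewrite (sum_n_ext_loc _ (fun j => coef t s D k' j (S n))).
        2:{ intros j Hj. unfold coef.
            replace (S j <=? S n)%nat with true by (symmetry; apply Nat.leb_le; lia).
            simpl (S k' - 1)%nat. simpl (S j - 1)%nat. rewrite !Nat.sub_0_r. reflexivity. }
        destruct (Nat.le_ge_cases k' n) as [Hkn|Hkn].
        + rewrite Nat.min_l by lia. reflexivity.
        + rewrite Nat.min_r by lia. rewrite <- (sum_n_trunc (fun j => coef t s D k' j (S n)) n (k' - n)).
          f_equal. lia. intros j Hj. unfold coef.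
          replace (S j <=? S n)%nat with false by (symmetry; apply Nat.leb_gt; lia). reflexivity. }
    destruct (main_pos t s D x c0 k' Ht Hx) as [M1 M2].
    split.
    + eapply ex_series_ext; [|exact M1]. intros n. rewrite ET. reflexivity.
    + eapply is_series_ext. { intros n. rewrite ET. reflexivity. }
      erewrite rhs_identity. exact M2. exact Hnz.
      * unfold fC. fold al be ga de. rewrite ED, Es, Et.
        rewrite !RtoC_div, RtoC_opp, RtoC_div, RtoC_minus, !RtoC_mult by nra.
        assert (Hde' : RtoC de <> 0%C) by (apply RtoC_nz; lra).
        assert (Hgx : (RtoC ga * x + RtoC de)%C <> 0%C).
        { replace (RtoC ga * x + RtoC de)%C with (RtoC de * (1 + RtoC t * x))%C.
          apply Cmult_neq_0; auto.
          rewrite Et. rewrite RtoC_div by lra. field. auto. }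
        rewrite Et in Hnz. rewrite RtoC_div in Hnz by lra.
        Ceq. field. split; auto. rewrite Cplus_comm; auto.
      * unfold fC. fold al be ga de. rewrite Es.
        rewrite RtoC_opp, RtoC_div by lra. Ceq. field. apply RtoC_nz. lra.
Qed.
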